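(* Let $m\ge2$, $Q=T_{(2^m)}$ and $K=K_Q(2)$. Let $M=\mathrm{diag}(a,a^{-1})X^b$ and $M'=\mathrm{diag}(a',a'^{-1})X^{b'}$ be elements of $K$ (with $\mathrm{diag}(a,a^{-1}),\mathrm{diag}(a',a'^{-1})\in Q$, $b,b'\in\{0,1\}$) such that $[M,M']=\pm\mathbbm{1}$. Then: (1) if $b=b'=0$, then $M,M'\in Q$ and $[M,M']=\mathbbm{1}$; (2) if $b=1$, $b'=0$, then $M'\in T_{(4)}$, and if moreover $[M,M']=\mathbbm{1}$ then $M'\in Z(K)$; (3) if $b=0$, $b'=1$, then $M\in T_{(4)}$, and if moreover $[M,M']=\mathbbm{1}$ then $M\in Z(K)$; (4) if $b=b'=1$, then $M=S_\chi M'$ for some $S_\chi\in T_{(4)}$, and if moreover $[M,M']=\mathbbm{1}$ then $M=\pm M'$.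
   Context: Let $\{|0\rangle,|1\rangle\}$ be the computational basis of $\mathbb{C}^2$ and $X|q\rangle=|q+1\bmod 2\rangle$. For $\xi:\mathbb{Z}_2\to U(1)$ let $S_\xi=\mathrm{diag}(\xi(0),\xi(1))$; $T=\{S_\xi:\xi(0)\xi(1)=1\}$ and $T_{(2^k)}=\{S\in T:S^{2^k}=\mathbbm{1}\}$. $K_Q(2)$ is the subgroup of $SU(2)$ generated by all $S_\xi X^b$ with $S_\xi\in Q$, $b\in\mathbb{Z}_2$. $Z(K)$ is the center of $K$. The commutator is $[A,B]=ABA^{-1}B^{-1}$. *)

(* Defs.v *)
(* 2x2 complex matrices over algC (algebraic complex numbers).
   All elements of the groups considered are roots of unity, hence algebraic. *)
From HB Require Import structures.
From mathcomp Require Import all_boot all_order all_algebra all_field.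
Set Implicit Arguments. Unset Strict Implicit. Unset Printing Implicit Defensive.
Import Order.TTheory GRing.Theory Num.Theory.
Local Open Scope ring_scope.

Notation mat2 := 'M[algC]_2.

Definition Xm : mat2 := \matrix_(i < 2, j < 2) (i != j)%:R.

Definition Sdiag (x y : algC) : mat2 :=
  \matrix_(i < 2, j < 2) (if i == j then (if i == ord0 then x else y) else 0).

Definition diaga (a : algC) : mat2 := Sdiag a a^-1.

Definition inT (S : mat2) : Prop :=
  exists x y : algC, `|x| = 1 /\ `|y| = 1 /\ x * y = 1 /\ S = Sdiag x y.

Definition inTk (k : nat) (S : mat2) : Prop := inT S /\ S ^+ (2 ^ k) = 1.

Inductive inK (Q : mat2 -> Prop) : mat2 -> Prop :=
  | K_gen S (b : bool) : Q S -> inK Q (S * Xm ^+ b)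
  | K_one : inK Q 1
  | K_mul A B : inK Q A -> inK Q B -> inK Q (A * B)
  | K_inv A : inK Q A -> inK Q (invmx A).

Definition inZK (Q : mat2 -> Prop) (M : mat2) : Prop :=
  inK Q M /\ forall N, inK Q N -> M * N = N * M.

Definition comm (A B : mat2) : mat2 := A * B * invmx A * invmx B.

(* Main.v *)
Require Import Defs.
From HB Require Import structures.
From mathcomp Require Import all_boot all_order all_algebra all_field.
From mathcomp Require Import ring.
Import Order.TTheory GRing.Theory Num.Theory.
Local Open Scope ring_scope.

Lemma SmulS p q r s : Sdiag p q * Sdiag r s = Sdiag (p * r) (q * s).
Proof.
apply/matrixP => i j; rewrite -mulmxE !mxE !big_ord_recr !big_ord0 /= !mxE.
case: i => [[|[|//]] ?]; case: j => [[|[|//]] ?]; rewrite /= ?mulr0 ?mul0r ?addr0 ?add0r //.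
Qed.

Lemma XS p q : Xm * Sdiag p q = Sdiag q p * Xm.
Proof.
apply/matrixP => i j; rewrite -!mulmxE !mxE !big_ord_recr !big_ord0 /= !mxE.
case: i => [[|[|//]] ?]; case: j => [[|[|//]] ?]; rewrite /= ?mulr0 ?mul0r ?addr0 ?add0r ?mulr1 ?mul1r //.
Qed.

Lemma XX : Xm * Xm = 1.
Proof.
apply/matrixP => i j; rewrite -!mulmxE !mxE !big_ord_recr !big_ord0 /= !mxE.
case: i => [[|[|//]] ?]; case: j => [[|[|//]] ?]; rewrite /= ?mulr0 ?mul0r ?addr0 ?add0r ?mulr1 ?mul1r //.
Qed.

Lemma S1 : Sdiag 1 1 = 1.
Proof.
apply/matrixP => i j; rewrite !mxE.
case: i => [[|[|//]] ?]; case: j => [[|[|//]] ?]; rewrite //=.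
Qed.

Lemma SN1 : Sdiag (-1) (-1) = -1.
Proof.
apply/matrixP => i j; rewrite !mxE.
case: i => [[|[|//]] ?]; case: j => [[|[|//]] ?]; rewrite //= ?oppr0.

all: reflexivity.
Qed.

Lemma Seq p q r s : Sdiag p q = Sdiag r s -> p = r /\ q = s.
Proof.
move/matrixP=> h; have := h ord0 ord0; have := h ord_max ord_max; rewrite !mxE /=.
by move=> -> ->.
Qed.

Lemma inv_eq (A B : mat2) : A * B = 1 -> invmx A = B.
Proof.
move=> h; have [uA _] := mulmx1_unit (h : A *m B = 1%:M).
by rewrite -[invmx A]mulmx1 -[1%:M]/(1 : mat2) -h mulmxE mulrA -mulmxE mulVmx // mul1mx.
Qed.

Lemma invS p q : p != 0 -> q != 0 -> invmx (Sdiag p q) = Sdiag p^-1 q^-1.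
Proof. by move=> hp hq; apply: inv_eq; rewrite SmulS !divff // S1. Qed.

Lemma invX : invmx Xm = Xm.
Proof. by apply: inv_eq; rewrite XX. Qed.

Lemma SX p q n : Sdiag p q ^+ n = Sdiag (p ^+ n) (q ^+ n).
Proof. elim: n => [|n IH]; first by rewrite !expr0 S1. by rewrite !exprS IH SmulS. Qed.

Definition mk p q (b : bool) : mat2 := Sdiag p q * Xm ^+ b.

Lemma mk_mul p q b r s c : mk p q b * mk r s c =
  mk (p * (if b then s else r)) (q * (if b then r else s)) (b (+) c).
Proof.
rewrite /mk; case: b; case: c => /=; rewrite ?expr0 ?expr1 ?mulr1 ?mul1r ?SmulS //.
- by rewrite -mulrA (mulrA Xm) XS -mulrA XX mulr1 SmulS.
- by rewrite -mulrA XS mulrA SmulS.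
- by rewrite mulrA SmulS.
Qed.

Lemma mk_inv p q b : p != 0 -> q != 0 -> invmx (mk p q b) =
  mk (if b then q^-1 else p^-1) (if b then p^-1 else q^-1) b.
Proof.
move=> hp hq; apply: inv_eq; rewrite mk_mul addbb /mk expr0 mulr1.
by case: b; rewrite !divff // S1.
Qed.

Lemma mk1 : (1 : mat2) = mk 1 1 false.
Proof. by rewrite /mk expr0 mulr1 S1. Qed.
Lemma mkN1 : (-1 : mat2) = mk (-1) (-1) false.
Proof. by rewrite /mk expr0 mulr1 SN1. Qed.
Lemma mk_eq p q r s : mk p q false = mk r s false -> p = r /\ q = s.
Proof. rewrite /mk expr0 !mulr1; exact: Seq. Qed.


Lemma inTkP k a : inTk k (diaga a) <-> `|a| = 1 /\ a ^+ (2 ^ k) = 1.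
Proof.
split.
  case=> [[x [y [hx [hy [hxy /Seq [ex ey]]]]]] p]; subst x; split => //.
  by move: p; rewrite /diaga SX -S1 => /Seq [].
case=> na p; have a0 : a != 0 by rewrite -normr_eq0 na oner_eq0.
split; last by rewrite /diaga SX exprVn p invr1 S1.
exists a, a^-1; split => //; split; first by rewrite normfV na invr1.
by split; first by rewrite divff.
Qed.

Lemma sq1 (u : algC) : u = 1 \/ u = -1 -> u ^+ 2 = 1.
Proof. by case=> ->; rewrite ?expr1n // sqrrN expr1n. Qed.

Lemma SN p q : Sdiag (- p) (- q) = - Sdiag p q.
Proof.
apply/matrixP => i j; rewrite !mxE.
case: i => [[|[|//]] ?]; case: j => [[|[|//]] ?]; rewrite //= ?oppr0.
all: reflexivity.
Qed.

Lemma mkpm1 (c : algC) : c ^+ 2 = 1 -> mk c c^-1 false = 1 \/ mk c c^-1 false = -1.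
Proof.
move/eqP; rewrite sqrf_eq1 => /orP [] /eqP ->.
  by left; rewrite invr1 mk1.
by right; rewrite invrN1 mkN1.
Qed.

Lemma central_pm1 (A : mat2) : A = 1 \/ A = -1 -> forall N, A * N = N * A.
Proof. by case=> -> N; rewrite ?mul1r ?mulr1 // mulN1r mulrN1. Qed.

Lemma hcsq u v : mk u v false = mk 1 1 false \/ mk u v false = mk (-1) (-1) false -> u ^+ 2 = 1.
Proof. by move=> h; apply: sq1; case: h => /mk_eq [-> _]; [left|right]. Qed.

Lemma sq4 (c : algC) : (c ^+ 2) ^+ 2 = 1 -> c ^+ (2 ^ 2) = 1.
Proof. by rewrite -exprM. Qed.

Theorem lemma9 (m : nat) (hm : (2 <= m)%N) (a a' : algC) (b b' : bool)
  (ha : inTk m (diaga a)) (ha' : inTk m (diaga a'))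
  (hc : comm (diaga a * Xm ^+ b) (diaga a' * Xm ^+ b') = 1 \/
        comm (diaga a * Xm ^+ b) (diaga a' * Xm ^+ b') = - 1) :
  let M := diaga a * Xm ^+ b in
  let M' := diaga a' * Xm ^+ b' in
  let Q := inTk m in
  (~~ b -> ~~ b' -> Q M /\ Q M' /\ comm M M' = 1) /\
  (b -> ~~ b' -> inTk 2 M' /\ (comm M M' = 1 -> inZK Q M')) /\
  (~~ b -> b' -> inTk 2 M /\ (comm M M' = 1 -> inZK Q M)) /\
  (b -> b' -> (exists S, inTk 2 S /\ M = S * M') /\
              (comm M M' = 1 -> M = M' \/ M = - M')).
Proof.
have [na pa] := proj1 (inTkP m a) ha.
have [na' pa'] := proj1 (inTkP m a') ha'.
have a0 : a != 0 by rewrite -normr_eq0 na oner_eq0.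
have a0' : a' != 0 by rewrite -normr_eq0 na' oner_eq0.
move=> M M' Q; rewrite {}/M {}/M' {}/Q.
change (diaga a * Xm ^+ b) with (mk a a^-1 b) in hc |- *.
change (diaga a' * Xm ^+ b') with (mk a' a'^-1 b') in hc |- *.
have hK : forall c, inTk m (diaga c) -> inK (inTk m) (mk c c^-1 false).
  by move=> c hc'; exact: (K_gen false hc').
have mkd : forall c, mk c c^-1 false = diaga c by move=> c; rewrite /mk expr0 mulr1.
case: b hc; case: b' => hc; rewrite /comm !mk_inv ?invr_eq0 // !mk_mul /= in hc |- *;
  rewrite mkN1 mk1 in hc.
- move/hcsq: hc => hu.
  set r := a / a'.
  have r0 : r != 0 by rewrite /r mulf_neq0 // invr_eq0.
  have ur : a / a' / a^-1 / a' = r ^+ 2 by rewrite /r; field; rewrite ?a0 ?a0'.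
  rewrite ur in hu.
  do 3 (split; first by []).
  move=> _ _; split.
    exists (mk r r^-1 false); split.
      rewrite mkd; apply/inTkP; split; last by exact: sq4.
      by rewrite /r normrM normfV na na' invr1 mulr1.
    by rewrite mk_mul /=; congr mk; rewrite /r; field; rewrite ?a0 ?a0'.
  rewrite mk1 => /mk_eq [e _]; move: e; rewrite ur => /eqP; rewrite sqrf_eq1.
  case/orP => /eqP e.
    left; have -> : a = a' by rewrite -[a](divfK a0') -/r e mul1r.
    by [].
  right; have -> : a = - a' by rewrite -[a](divfK a0') -/r e mulN1r.
  by rewrite invrN /mk SN mulNr.
- move/hcsq: hc => hu.
  have ur : a / a' / a / a' = (a' ^+ 2)^-1 by field; rewrite ?a0 ?a0'.
  rewrite ur in hu.
  have hc2 : (a' ^+ 2) ^+ 2 = 1.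
    by move: hu; rewrite exprVn => /eqP; rewrite invr_eq1 => /eqP.
  do 1 (split; first by []).
  split; last by split; [by []| split; by []].
  move=> _ _; split.
    by rewrite mkd; apply/inTkP; split => //; apply: sq4.
  rewrite mk1 => /mk_eq [e _]; move: e; rewrite ur => /eqP; rewrite invr_eq1 => /eqP e.
  split; first by apply: hK.
  by move=> N _; apply: central_pm1; apply: mkpm1.
- move/hcsq: hc => hu.
  have ur : a * a' / a^-1 / a' = a ^+ 2 by field; rewrite ?a0 ?a0'.
  rewrite ur in hu.
  do 2 (split; first by []).
  split; last by [].
  move=> _ _; split.
    by rewrite mkd; apply/inTkP; split => //; apply: sq4.
  rewrite mk1 => /mk_eq [e _]; move: e; rewrite ur => e.
  split; first by apply: hK.
  by move=> N _; apply: central_pm1; apply: mkpm1.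
- split; last by [].
  move=> _ _; rewrite !mkd; do 2 (split; first by []).
  by rewrite mk1; congr mk; field; rewrite ?a0 ?a0'.
Qed.
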